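(* For every finite linear order $Y$, $\mathsf{rk}(Y)=\lfloor\log_2(|Y|+1)\rfloor$. In particular, for $n\in\omega$, $\mathsf{rk}(Y)\ge n$ if and only if $|Y|\ge 2^n-1$.
   Context: Let $\mathcal F$ be the class of finite linear orders (language $\{<\}$); substructures are suborders and $\mathsf{age}(X)$ is the set of finite suborders of a linear order $X$. For $A\le B$, $B$ is a prime extension of $A$ if $|B\setminus A|=1$; a realization of $B$ in $X$ (where $A\le X$) is $C\le X$ with $A\le C$ and an order-isomorphism $B\to C$ fixing $A$ pointwise. For $F\in\mathsf{age}(X)$ define by recursion: $\mathsf{rk}_X(F)\ge0$ always; $\mathsf{rk}_X(F)\ge\alpha+1$ iff every prime extension $B\in\mathcal F$ of $F$ has a realization $C$ in $X$ with $\mathsf{rk}_X(C)\ge\alpha$; for limit $\alpha$, $\mathsf{rk}_X(F)\ge\alpha$ iff $\mathsf{rk}_X(F)\ge\beta$ for all $\beta<\alpha$. $\mathsf{rk}_X(F)=\sup\{\alpha:\mathsf{rk}_X(F)\ge\alpha\}$ (or $\infty$ if this holds for all ordinals), and $\mathsf{rk}(X)=\mathsf{rk}_X(\emptyset)$. *)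

(* Defs.v *)
From HB Require Import structures.
From mathcomp Require Import all_boot all_order.
Set Implicit Arguments. Unset Strict Implicit. Unset Printing Implicit Defensive.
Import Order.TTheory.
Local Open Scope order_scope.

(* A linear order X is a type T with an orderType structure; elements of
   age(X) are finite subsets F : {set T} with the induced order.

   A prime extension B of F (B in the class of finite linear orders, F <= B,
   |B \ F| = 1) is represented, up to isomorphism over F, as a strict linear
   order r on the carrier  {None} U {Some a | a \in F}  (None is the new point)
   whose restriction to F is the order of X. *)
Section Rank.
Variables (d : Order.disp_t) (T : finOrderType d).

Definition ext_dom (F : {set T}) (u : option T) : bool :=
  if u is Some a then a \in F else true.

Definition prime_ext (F : {set T}) (r : rel (option T)) : Prop :=
  [/\ (forall u, ext_dom F u -> ~~ r u u),
      (forall u v w, ext_dom F u -> ext_dom F v -> ext_dom F w ->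
          r u v -> r v w -> r u w),
      (forall u v, ext_dom F u -> ext_dom F v -> u != v -> r u v || r v u)
    & (forall a b, a \in F -> b \in F -> r (Some a) (Some b) = (a < b))].

(* f realizes B in X over F: f is an order isomorphism from B onto its image
   C = f(B) <= X, fixing F pointwise.  Then C = f None |: F. *)
Definition realizes (F : {set T}) (r : rel (option T)) (f : option T -> T) : Prop :=
  (forall a, a \in F -> f (Some a) = a) /\
  (forall u v, ext_dom F u -> ext_dom F v -> r u v = (f u < f v)).

(* rk_X(F) >= n, for finite ordinals n (the ordinal recursion restricted to omega). *)
Fixpoint rk_ge (n : nat) (F : {set T}) : Prop :=
  match n with
  | 0 => True
  | n'.+1 => forall r, prime_ext F r ->
               exists f, realizes F r f /\ rk_ge n' (f None |: F)
  end.

End Rank.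

(* Main.v *)
Require Import Defs.
From HB Require Import structures.
From mathcomp Require Import all_boot all_order.
From mathcomp Require Import zify.
Set Implicit Arguments. Unset Strict Implicit. Unset Printing Implicit Defensive.
Import Order.TTheory.

Section S.
Variables (d : Order.disp_t) (T : finOrderType d).
Local Open Scope order_scope.
Implicit Types (F : {set T}) (r : rel (option T)).

Definition Gap F r : {set T} :=
  [set y | (y \notin F) && [forall a in F, (a < y) == r (Some a) None]].

Lemma inGap F r y : reflect (y \notin F /\ forall a, a \in F -> (a < y) = r (Some a) None) (y \in Gap F r).
Proof.
rewrite inE; apply: (iffP andP) => [[yF /forall_inP H]|[yF H]]; split => //.
- by move=> a aF; apply/eqP/H.
- by apply/forall_inP => a aF; rewrite H.
Qed.

Lemma pe_neg F r u v : prime_ext F r -> ext_dom F u -> ext_dom F v -> u != v -> r v u = ~~ r u v.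
Proof.
case=> irr tr tot _ du dv uv.
have := tot u v du dv uv.
case ruv: (r u v) => /= H.
  apply/negP => rvu. by move: (irr u du); rewrite (tr u v u du dv du ruv rvu).
by rewrite H.
Qed.

Lemma L1 F r f : prime_ext F r -> realizes F r f -> f None \in Gap F r.
Proof.
move=> Pr [fx hr]; apply/inGap; split.
- apply/negP => xF.
  have := @pe_neg F r (Some (f None)) None Pr xF isT isT.
  by rewrite !hr //= fx // ltxx.
- by move=> a aF; rewrite hr //= fx.
Qed.

Definition fat (x : T) (u : option T) := if u is Some a then a else x.

Lemma L2 F r x : prime_ext F r -> x \in Gap F r -> realizes F r (fat x).
Proof.
move=> Pr /inGap [xF H]; split => // -[a|] [b|] //= du dv.
- by case: Pr => _ _ _ ->.
- by rewrite H.
- rewrite (@pe_neg F r (Some b) None) //= -H //.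
  have bx : b != x by apply: contraNneq xF => <-.
  by rewrite -leNgt le_eqVlt eq_sym (negbTE bx).
- by case: Pr => irr _ _ _; rewrite ltxx; apply/negbTE/irr.
Qed.

Lemma pe_restrict F r x : prime_ext (x |: F) r -> prime_ext F r.
Proof.
have sub u : ext_dom F u -> ext_dom (x |: F) u.
  by case: u => //= a aF; rewrite in_setU1 aF orbT.
case=> irr tr tot ord; split.
- by move=> u /sub; apply: irr.
- by move=> u v w /sub du /sub dv /sub dw; apply: tr.
- by move=> u v /sub du /sub dv; apply: tot.
- by move=> a b aF bF; apply: ord; rewrite in_setU1 ?aF ?bF orbT.
Qed.

Definition rel_at (x : T) (b : bool) : rel (option T) := fun u v =>
  match u, v with
  | Some a, Some c => a < c
  | Some a, None => if b then a <= x else a < x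
  | None, Some c => if b then x < c else x <= c
  | None, None => false
  end.

Lemma rel_at_pe x b F : prime_ext F (rel_at x b).
Proof.
split.
- by case=> [a|] //= _; rewrite ltxx.
- move=> [a|] [c|] [e|] //= _ _ _; case: b => //=;
  move=> H1 H2; first [exact: lt_trans H1 H2 | exact: lt_le_trans H1 H2
     | exact: le_lt_trans H1 H2 | exact: le_trans H1 H2
     | exact: ltW (lt_le_trans H1 H2) | exact: ltW (le_lt_trans H1 H2)
     | by have := lt_le_trans H1 H2; rewrite ltxx
     | by have := le_lt_trans H1 H2; rewrite ltxx
     | by have := lt_trans H1 H2; rewrite ltxx | idtac].
- move=> [a|] [c|] //= _ _.
  + by case: ltgtP => // ->; rewrite eqxx.
  + by case: b => _; rewrite leNgt ?orbN ?orNb.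
  + by case: b => _; rewrite leNgt ?orbN ?orNb.
- by [].
Qed.

Lemma card_split (A : {set T}) x : x \in A ->
  #|A| = #|[set y in A | y < x]| + #|[set y in A | x < y]| + 1.
Proof.
move=> xA.
have E1 : A :&: [set y | y < x] = [set y in A | y < x] by apply/setP=> y; rewrite !inE.
have E2 : A :\: [set y | y < x] = x |: [set y in A | x < y].
  apply/setP=> y; rewrite !inE; case: (ltgtP y x) => [yx|xy|->]; rewrite ?andbF ?andbT ?xA /=; try done.
rewrite -(cardsID [set y | y < x] A) E1 E2 cardsU1 inE ltxx andbF /=.
by rewrite add1n addnS addn1.
Qed.

Lemma exists_rank (A : {set T}) k : (k < #|A|)%N ->
  exists2 x, x \in A & #|[set y in A | y < x]| = k.
Proof.
move=> kA.
pose phi x := #|[set y in A | y < x]|.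
have mono : {in A &, forall x x', x < x' -> (phi x < phi x')%N}.
  move=> x x' xA x'A xx'; apply: proper_card; apply/properP; split.
    by apply/subsetP => y; rewrite !inE => /andP[-> yx]; exact: lt_trans yx xx'.
  by exists x; rewrite !inE ?xA ?xx' ?ltxx.
have inj : {in A &, injective phi}.
  move=> x x' xA x'A; case: (ltgtP x x') => // h E.
    by have := mono _ _ xA x'A h; rewrite E ltnn.
  by have := mono _ _ x'A xA h; rewrite E ltnn.
have bound x : x \in A -> (phi x < #|A|)%N.
  move=> xA; apply: proper_card; apply/properP; split.
    by apply/subsetP => y; rewrite !inE => /andP[].
  by exists x; rewrite // !inE ltxx andbF.
have us : uniq (map phi (enum A)).
  rewrite map_inj_in_uniq ?enum_uniq // => x x'; rewrite !mem_enum; exact: inj.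
have sub : {subset map phi (enum A) <= iota 0 #|A|}.
  by move=> i /mapP [x]; rewrite mem_enum mem_iota => xA ->; rewrite add0n bound.
have sz : (size (iota 0 #|A|) <= size (map phi (enum A)))%N.
  by rewrite size_iota size_map -cardE.
have [_ eqs] := uniq_min_size us sub sz.
have : k \in map phi (enum A) by rewrite eqs mem_iota.
by case/mapP => x; rewrite mem_enum => xA ->; exists x.
Qed.

Lemma gap_eq F r r' x : x \in Gap F r -> x \in Gap F r' -> Gap F r = Gap F r'.
Proof.
move=> /inGap [_ Hx] /inGap [_ Hx']; apply/setP => y.
by apply/idP/idP => /inGap [yF H]; apply/inGap; split => // a aF;
  rewrite H // ?Hx ?Hx' // -?Hx -?Hx'.
Qed.

Lemma GapU_elim F r x y : y \in Gap (x |: F) r ->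
  [/\ y != x, (x < y) = r (Some x) None & y \in Gap F r].
Proof.
move/inGap => [yF H]; move: yF; rewrite in_setU1 negb_or => /andP[yx yF].
split => //; first by apply: H; rewrite setU11.
by apply/inGap; split => // a aF; apply: H; rewrite in_setU1 aF orbT.
Qed.

Lemma GapU_intro F r x y : y != x -> (x < y) = r (Some x) None -> y \in Gap F r ->
  y \in Gap (x |: F) r.
Proof.
move=> yx hx /inGap [yF H]; apply/inGap; split.
  by rewrite in_setU1 negb_or yx yF.
by move=> a; rewrite in_setU1 => /orP[/eqP->|aF] //; apply: H.
Qed.

Lemma fiddly F r x y : prime_ext (x |: F) r -> x \notin F -> x \notin Gap F r ->
  y \in Gap F r -> (x < y) = r (Some x) None.
Proof.
move=> Pr xF xnG /inGap [yF Hy].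
have [a aF ha] : exists2 a, a \in F & ~~ ((a < x) == r (Some a) None).
  by move: xnG; rewrite inE xF /= => /forall_inPn.
have ax : a != x by apply: contraNneq xF => <-.
have dx : ext_dom (x |: F) (Some x) by rewrite /= setU11.
have da : ext_dom (x |: F) (Some a) by rewrite /= in_setU1 aF orbT.
case: (Pr) => _ tr _ ord.
case c: (r (Some x) None).
- case ax': (a < x) in ha.
  + have ran : r (Some a) None = false by move: ha; case: (r _ _).
    have rna : r None (Some a) by rewrite (pe_neg Pr) //= ran.
    have := tr (Some x) None (Some a) dx isT da c rna; rewrite ord ?setU11 // => xa.
    by have := lt_trans ax' xa; rewrite ltxx.
  + have ran : r (Some a) None by move: ha; case: (r _ _).
    have xa : x < a by rewrite lt_neqAle eq_sym ax leNgt ax'.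
    by apply: lt_trans xa _; rewrite Hy.
- have rnx : r None (Some x) by rewrite (pe_neg Pr) //= c.
  case ax': (a < x) in ha.
  + have ran : r (Some a) None = false by move: ha; case: (r _ _).
    have ya : y <= a by rewrite leNgt Hy // ran.
    by apply/negbTE; rewrite -leNgt ltW // (le_lt_trans ya ax').
  + have ran : r (Some a) None by move: ha; case: (r _ _).
    have := tr (Some a) None (Some x) da isT dx ran rnx; rewrite ord ?setU11 ?ax' // in_setU1 aF orbT.
Qed.

Lemma x_in_rel_at F x b : x \notin F -> x \in Gap F (rel_at x b).
Proof.
move=> xF; apply/inGap; split => // a aF /=; case: b => //.
have ax : a != x by apply: contraNneq xF => <-.
by rewrite lt_neqAle ax.
Qed.

Lemma rk_geP n : forall F : {set T},
  rk_ge n F <-> (forall r, prime_ext F r -> (2 ^ n - 1 <= #|Gap F r|)%N).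
Proof.
elim: n => [|n IH] F /=.
  by split => // _ r _; rewrite expn0 subnn.
split.
- move=> H r Pr; have [f [Rf Hn]] := H r Pr.
  have xG := L1 Pr Rf; move: Hn xG; set x := f None => Hn xG.
  have xF : x \notin F by case/inGap: xG.
  have Hn' := (IH _).1 Hn.
  have h1 := Hn' _ (rel_at_pe x false (x |: F)).
  have h2 := Hn' _ (rel_at_pe x true (x |: F)).
  have E1 := gap_eq (x_in_rel_at false xF) xG.
  have E2 := gap_eq (x_in_rel_at true xF) xG.
  have s1 : Gap (x |: F) (rel_at x false) \subset [set y in Gap F r | y < x].
    apply/subsetP => y /GapU_elim [yx /= hx yG]; rewrite inE -E1 yG /=.
    by rewrite lt_neqAle yx leNgt hx ltxx.
  have s2 : Gap (x |: F) (rel_at x true) \subset [set y in Gap F r | x < y].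
    apply/subsetP => y /GapU_elim [yx /= hx yG]; rewrite inE -E2 yG /=.
    by rewrite hx lexx.
  rewrite (card_split xG).
  move: (subset_leq_card s1) (subset_leq_card s2) h1 h2 (expn_gt0 2 n).
  rewrite expnS.
  move: (#|_|) (#|_|) (#|_|) (#|_|) (2 ^ n) => a b c e g; lia.
- move=> H r Pr.
  have hG := H r Pr.
  have [x xG hx] : exists2 x, x \in Gap F r & #|[set y in Gap F r | y < x]| = 2 ^ n - 1.
    apply: exists_rank; move: hG (expn_gt0 2 n); rewrite expnS.
    move: (#|_|) (2 ^ n) => a f; lia.
  have xF : x \notin F by case/inGap: xG.
  have hsplit := card_split xG.
  exists (fat x); split; first exact: L2.
  rewrite /=; apply/IH => r' Pr'.
  have PrF := pe_restrict Pr'.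
  case: (boolP (x \in Gap F r')) => xG'.
  + have E := gap_eq xG xG'.
    case c: (r' (Some x) None).
    * have: [set y in Gap F r | x < y] \subset Gap (x |: F) r'.
        apply/subsetP => y; rewrite inE => /andP[yG xy]; apply: GapU_intro.
        - by rewrite gt_eqF.
        - by rewrite xy c.
        - by rewrite -E.
      move/subset_leq_card; move: hsplit hx hG (expn_gt0 2 n); rewrite expnS.
      move: (#|_|) (#|_|) (#|_|) (#|_|) (2 ^ n) => a b c' e f; lia.
    * have: [set y in Gap F r | y < x] \subset Gap (x |: F) r'.
        apply/subsetP => y; rewrite inE => /andP[yG yx]; apply: GapU_intro.
        - by rewrite lt_eqF.
        - by rewrite c; apply/negbTE; rewrite -leNgt ltW.
        - by rewrite -E.
      by move/subset_leq_card; rewrite hx.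
  + have: Gap F r' \subset Gap (x |: F) r'.
      apply/subsetP => y yG; apply: GapU_intro => //.
      - by apply: contraNneq xG' => <-.
      - exact: fiddly Pr' xF xG' yG.
    move/subset_leq_card; move: (H r' PrF) (expn_gt0 2 n); rewrite expnS.
    move: (#|_|) (#|_|) (2 ^ n) => a b f; lia.
Qed.

Lemma Gap0 r : Gap set0 r = [set: T].
Proof.
by apply/setP => y; rewrite !inE; apply/forall_inP => a; rewrite inE.
Qed.

Lemma pe0 : prime_ext (set0 : {set T}) (fun _ _ => false).
Proof.
split => //.
- by case=> [a|] [b|] //=; rewrite ?in_set0.
- by move=> a b; rewrite in_set0.
Qed.

Lemma rk0P n : rk_ge n (set0 : {set T}) <-> (2 ^ n - 1 <= #|T|)%N.
Proof.
rewrite rk_geP; split.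
- by move/(_ _ pe0); rewrite Gap0 cardsT.
- by move=> h r _; rewrite Gap0 cardsT.
Qed.
End S.

Theorem theorem6p4 (d : Order.disp_t) (T : finOrderType d) :
  (forall n : nat, rk_ge n (set0 : {set T}) <-> n <= trunc_log 2 (#|T|).+1) /\
  (forall n : nat, rk_ge n (set0 : {set T}) <-> 2 ^ n - 1 <= #|T|).
Proof.
split => n; rewrite rk0P //.
have e : (2 ^ n - 1 <= #|T|) = (2 ^ n <= #|T|.+1).
  by rewrite leq_subLR add1n.
rewrite e; split.
- exact: trunc_log_max.
- move=> h; apply: leq_trans (trunc_logP (isT : 1 < 2) (ltn0Sn _)).
  by rewrite leq_exp2l.
Qed.
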